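(* Let $w\doteq\delta^n\tau_1^{u_1}\cdots\tau_t^{u_t}$ be a word in Xu normal form. Then the unique word in Garside normal form conjugate to $w$ is as follows (with $k\in\mathbb{Z}$): - $w\doteq\delta^{3k}$: $\Delta^{2k}$; - $w\doteq\delta^{3k+1}$: $\Delta^{2k}ab$; - $w\doteq\delta^{3k+2}$: $\Delta^{2k}a^3b$; - $w\doteq\delta^{3k}a^{u_1}$: $\Delta^{2k}a^{u_1}$; - $w\doteq\delta^{3k+1}a$: $\Delta^{2k}a^2b$; - $w\doteq\delta^{3k+2}a^{u_1}$: $\Delta^{2k+1}a^{1+u_1}$; - $t\geq 2$ (case (c) of the Xu normal form criterion): $\Delta^{(2n-t)/3}\sigma_1^{1+u_1}\sigma_2^{1+u_2}\cdots\sigma_t^{1+u_t}$.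
   Context: $B_3=\langle a,b\mid aba=bab\rangle$, $x=a^{-1}ba$, $\delta=ba$, $\Delta=aba$. For $i\in\mathbb{Z}$: $\tau_i=a,b,x$ according as $i\equiv1,2,0\pmod 3$; $\sigma_i=a$ if $i$ odd, $\sigma_i=b$ if $i$ even. A word $\delta^n\tau_1^{u_1}\cdots\tau_t^{u_t}$ ($n\in\mathbb{Z}$, $t\ge0$, $u_i\ge1$) is in Xu normal form if $(-n,t,u_1,\dots,u_t)$ is lexicographically minimal among all such words representing braids in the same conjugacy class. A word $\Delta^\ell\sigma_1^{p_1}\cdots\sigma_r^{p_r}$ with $\ell\in\mathbb{Z}$, $r\ge0$, $p_i\ge1$ is in Garside normal form if one of: (A) $\ell$ even and $r\in\{0,1\}$; (B) $\ell$ even, $r=2$, $p_1\in\{1,2,3\}$, $p_2=1$; (C)/(D) $r\ge1$, all $p_i\ge2$, $\ell\equiv r\pmod 2$, and $(p_1,\dots,p_r)$ lexicographically minimal among its cyclic permutations. Every conjugacy class of $B_3$ contains a unique word in Garside normal form. *)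

(* Defs.v *)
(* The braid group B_3 is modelled as words in a, b and their
   inverses, modulo the congruence generated by free cancellation and aba = bab. *)
From mathcomp Require Import all_boot all_order all_algebra.
Set Implicit Arguments. Unset Strict Implicit. Unset Printing Implicit Defensive.
Import GRing.Theory Num.Theory.

Inductive gen := GA | GB.

(* a letter: generator together with a flag "is inverted" *)
Definition letter := (gen * bool)%type.
Definition word := list letter.

Definition la : letter := (GA, false).
Definition lb : letter := (GB, false).
Definition linv (l : letter) : letter := (l.1, ~~ l.2).
Definition winv (w : word) : word := rev (map linv w).

Inductive rule : word -> word -> Prop :=
  | rule_cancel (l : letter) : rule [:: l; linv l] [::]
  | rule_braid : rule [:: la; lb; la] [:: lb; la; lb].

Inductive step : word -> word -> Prop :=
  | step_ctx (u v l r : word) : rule l r -> step (u ++ l ++ v) (u ++ r ++ v).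

Inductive beq : word -> word -> Prop :=
  | beq_step u v : step u v -> beq u v
  | beq_refl u : beq u u
  | beq_sym u v : beq u v -> beq v u
  | beq_trans u v w : beq u v -> beq v w -> beq u w.

Definition bconj (u v : word) : Prop := exists z : word, beq (z ++ u ++ winv z) v.

Definition wpown (w : word) (m : nat) : word := flatten (nseq m w).
Definition wpow (w : word) (n : int) : word :=
  match n with
  | Posz m => wpown w m
  | Negz m => wpown (winv w) m.+1
  end.

Definition wa : word := [:: la].
Definition wb : word := [:: lb].
Definition wx : word := winv wa ++ wb ++ wa.
Definition wdelta : word := wb ++ wa.
Definition wDelta : word := wa ++ wb ++ wa.

Definition tau (i : nat) : word :=
  if i %% 3 == 1 then wa else if i %% 3 == 2 then wb else wx.
Definition sigma (i : nat) : word := if odd i then wa else wb.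

Definition prodpow (f : nat -> word) (es : seq nat) : word :=
  flatten [seq wpown (f i.+1) (nth 0 es i) | i <- iota 0 (size es)].

Definition xu_word (n : int) (us : seq nat) : word := wpow wdelta n ++ prodpow tau us.
Definition garside_word (l : int) (ps : seq nat) : word := wpow wDelta l ++ prodpow sigma ps.

Fixpoint lexle (s t : seq nat) : bool :=
  match s, t with
  | [::], _ => true
  | _ :: _, [::] => false
  | x :: s', y :: t' => (x < y)%N || ((x == y) && lexle s' t')
  end.

(* (-n, t, u_1, ..., u_t) <=lex (-n', t', u'_1, ..., u'_t') *)
Definition xu_le (n : int) (us : seq nat) (n' : int) (us' : seq nat) : Prop :=
  (- n < - n')%R \/
  (n = n' /\ ((size us < size us')%N \/ (size us = size us' /\ lexle us us'))).

Definition pos_exps (es : seq nat) : bool := all (fun u => 0 < u)%N es.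

Definition xu_normal (n : int) (us : seq nat) : Prop :=
  pos_exps us /\
  forall (n' : int) (us' : seq nat), pos_exps us' ->
    bconj (xu_word n us) (xu_word n' us') -> xu_le n us n' us'.

Definition int_odd (l : int) : bool := odd `|l|%N.

Definition garside_normal (l : int) (ps : seq nat) : Prop :=
  pos_exps ps /\
  [\/ (~~ int_odd l /\ (size ps <= 1)%N),
      (~~ int_odd l /\ exists p1, ps = [:: p1; 1%N] /\ p1 \in [:: 1; 2; 3]%N) |
      [/\ (1 <= size ps)%N, all (fun p => 2 <= p)%N ps,
          int_odd l = odd (size ps)
        & forall i, (i < size ps)%N -> lexle ps (rot i ps)]].

(* Main.v *)
Require Import Defs.
From mathcomp Require Import all_boot all_order all_algebra.
From mathcomp Require Import zify.
From Stdlib Require Import Setoid Morphisms.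
Import GRing.Theory Num.Theory.
Set Implicit Arguments. Unset Strict Implicit.
Local Open Scope ring_scope.

Arguments beq_trans {u v w}.
Arguments beq_sym {u v}.

Lemma beq_catl x u v : beq u v -> beq (x ++ u) (x ++ v).
Proof.
elim=> {u v} [u v st|u|u v _ IH|u v w _ IH1 _ IH2].
- case: st => u' v' l r rl; apply: beq_step.
  by have := step_ctx (x ++ u') v' rl; rewrite -!catA.
- exact: beq_refl.
- exact: beq_sym.
- exact: beq_trans IH2.
Qed.

Lemma beq_catr y u v : beq u v -> beq (u ++ y) (v ++ y).
Proof.
elim=> {u v} [u v st|u|u v _ IH|u v w _ IH1 _ IH2].
- case: st => u' v' l r rl; apply: beq_step.
  by have := step_ctx u' (v' ++ y) rl; rewrite -!catA.
- exact: beq_refl.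
- exact: beq_sym.
- exact: beq_trans IH2.
Qed.

#[export] Instance beq_Equiv : Equivalence beq.
Proof. split; [exact: beq_refl | move=> ??; exact: beq_sym | move=> ???; exact: beq_trans]. Qed.

#[export] Instance cat_Proper : Proper (beq ==> beq ==> beq) (@cat letter).
Proof.
move=> u u1 H v v1 H1 /=; exact: (beq_trans (beq_catr v H) (beq_catl u1 H1)).
Qed.

Notation "u =b v" := (beq u v) (at level 70).
Lemma beq_cat u u1 v v1 : u =b u1 -> v =b v1 -> u ++ v =b u1 ++ v1.
Proof. move=> H H1; exact: (beq_trans (beq_catr v H) (beq_catl u1 H1)). Qed.
#[export] Hint Resolve beq_refl : core.

Lemma rule_beq l r : rule l r -> l =b r.
Proof. move=> H; apply: beq_step; have := step_ctx [::] [::] H; by rewrite /= !cats0. Qed.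

Lemma linvK l : linv (linv l) = l.
Proof. by case: l => g []. Qed.

Lemma winvK w : winv (winv w) = w.
Proof. rewrite /winv map_rev revK -map_comp; elim: w => //= l w ->; by rewrite linvK. Qed.

Lemma winv_cat u v : winv (u ++ v) = winv v ++ winv u.
Proof. by rewrite /winv map_cat rev_cat. Qed.

Lemma winv_cons l w : winv (l :: w) = winv w ++ [:: linv l].
Proof. by rewrite /winv /= rev_cons cats1. Qed.

Lemma cancel1 l : [:: l; linv l] =b [::].
Proof. apply: rule_beq; constructor. Qed.

Lemma cancel2 l : [:: linv l; l] =b [::].
Proof. have := cancel1 (linv l); by rewrite linvK. Qed.

Lemma winvR w : w ++ winv w =b [::].
Proof.
elim: w => [|l w IH] //=.
rewrite winv_cons -cat_cons -cat1s catA -(catA [:: l]) IH cats0 /=.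
exact: cancel1.
Qed.

Lemma winvL w : winv w ++ w =b [::].
Proof. have := winvR (winv w); by rewrite winvK. Qed.

Lemma winv_beq u v : u =b v -> winv u =b winv v.
Proof.
move=> H.
transitivity (winv u ++ v ++ winv v); first by rewrite winvR cats0; reflexivity.
transitivity (winv u ++ u ++ winv v).
  by apply: beq_catl; apply: beq_catr; exact: beq_sym H.
by rewrite catA winvL.
Qed.

#[export] Instance winv_Proper : Proper (beq ==> beq) winv.
Proof. move=> u v; exact: winv_beq. Qed.

Lemma canR u v : u ++ v ++ winv v =b u.
Proof. by rewrite winvR cats0. Qed.
Lemma canL u v : u ++ winv u ++ v =b v.
Proof. by rewrite catA winvR. Qed.
Lemma canR' u v : u ++ winv v ++ v =b u.
Proof. by rewrite winvL cats0. Qed.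
Lemma canL' u v : winv u ++ u ++ v =b v.
Proof. by rewrite catA winvL. Qed.

Lemma wpown0 w : wpown w 0 = [::]. Proof. by []. Qed.
Lemma wpownS w m : wpown w m.+1 = w ++ wpown w m. Proof. by []. Qed.
Lemma wpownD w m k : wpown w (m + k) = wpown w m ++ wpown w k.
Proof. by elim: m => [|m IH] //=; rewrite addSn !wpownS IH catA. Qed.
Lemma wpown1 w : wpown w 1 = w. Proof. by rewrite wpownS cats0. Qed.
Lemma wpownSr w m : wpown w m.+1 = wpown w m ++ w.
Proof. by rewrite -addn1 wpownD wpown1. Qed.
Lemma wpownM w m k : wpown w (m * k) = wpown (wpown w m) k.
Proof. elim: k => [|k IH]; first by rewrite muln0. by rewrite mulnS wpownD IH. Qed.
Lemma winv_wpown w m : winv (wpown w m) = wpown (winv w) m.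
Proof. elim: m => [|m IH] //. by rewrite wpownS winv_cat IH -wpownSr. Qed.
Lemma wpown_beq u v m : u =b v -> wpown u m =b wpown v m.
Proof. move=> H; elim: m => [|m IH] //. rewrite !wpownS; exact: beq_cat H IH. Qed.
#[export] Instance wpown_Proper : Proper (beq ==> eq ==> beq) wpown.
Proof. move=> u v H m _ <-; exact: wpown_beq. Qed.

Lemma wpow_beq u v n : u =b v -> wpow u n =b wpow v n.
Proof. move=> H; case: n => m /=; apply: wpown_beq => //; exact: winv_beq. Qed.
#[export] Instance wpow_Proper : Proper (beq ==> eq ==> beq) wpow.
Proof. move=> u v H m _ <-; exact: wpow_beq. Qed.

Lemma wpowS w a : wpow w (a + 1) =b wpow w a ++ w.
Proof.
case: a => m.
- have -> : Posz m + 1 = Posz m.+1 by lia.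
  by rewrite /= wpownSr.
- case: m => [|m].
  + have -> : Negz 0 + 1 = 0 by [].
    rewrite /= wpown1; symmetry; exact: winvL.
  + have -> : Negz m.+1 + 1 = Negz m by rewrite !NegzE; lia.
    by rewrite /= (wpownSr (winv w) m.+1) -catA winvL cats0.
Qed.

Lemma wpowP w a : wpow w (a - 1) =b wpow w a ++ winv w.
Proof.
have := wpowS w (a - 1); rewrite subrK => ->.
by rewrite -catA canR.
Qed.

Lemma wpowDn w a (m : nat) : wpow w (a + m%:Z) =b wpow w a ++ wpow w m.
Proof.
elim: m => [|m IH]; first by rewrite addr0 /= cats0.
have -> : a + m.+1%:Z = (a + m) + 1 by lia.
rewrite wpowS IH -catA. apply: beq_catl.
have := wpowS w m; have -> : Posz m + 1 = Posz m.+1 by lia.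
move=> ->; by [].
Qed.

Lemma wpowNn w (m : nat) : wpow w (- m%:Z) = wpown (winv w) m.
Proof. by case: m => [|m] //; rewrite NegzE. Qed.

Lemma wpowBn w a (m : nat) : wpow w (a - m%:Z) =b wpow w a ++ wpow w (- m%:Z).
Proof.
elim: m => [|m IH]; first by rewrite subr0 /= cats0.
have -> : a - m.+1%:Z = (a - m%:Z) - 1 by lia.
rewrite wpowP IH -catA. apply: beq_catl.
by rewrite !wpowNn wpownSr.
Qed.

Lemma wpowD w a b : wpow w (a + b) =b wpow w a ++ wpow w b.
Proof.
case: b => m; first exact: wpowDn.
rewrite NegzE; exact: wpowBn.
Qed.

Lemma wpow_nat w (m : nat) : wpow w m%:Z = wpown w m. Proof. by []. Qed.

Lemma wpowM w (c : nat) k : wpow w (c%:Z * k) = wpow (wpown w c) k.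
Proof.
case: k => m.
- by rewrite -PoszM /= wpownM.
Abort.

Lemma wpown_nil m : wpown [::] m = [::].
Proof. by elim: m. Qed.

Lemma wpowM w (c : nat) k : wpow w (c%:Z * k) = wpow (wpown w c) k.
Proof.
case: k => m.
- by rewrite -PoszM /= wpownM.
- have -> : c%:Z * Negz m = - (c * m.+1)%N%:Z by rewrite NegzE; lia.
  by rewrite wpowNn /= wpownM winv_wpown.
Qed.

Definition comm (x y : word) := x ++ y =b y ++ x.

#[export] Instance comm_Proper : Proper (beq ==> beq ==> iff) comm.
Proof. move=> x x1 H y y1 H1; rewrite /comm; by rewrite H H1. Qed.

Lemma comm_sym x y : comm x y -> comm y x.
Proof. by rewrite /comm => ->. Qed.

Lemma comm_nil y : comm [::] y.
Proof. by rewrite /comm cats0. Qed.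

Lemma comm_cat x1 x2 y : comm x1 y -> comm x2 y -> comm (x1 ++ x2) y.
Proof. rewrite /comm => H1 H2; by rewrite -catA H2 !catA H1. Qed.

Lemma comm_winv x y : comm x y -> comm (winv x) y.
Proof.
rewrite /comm => H.
transitivity (winv x ++ y ++ x ++ winv x); first by rewrite canR.
by rewrite (catA y) -H catA canL'.
Qed.

Lemma comm_wpown x y m : comm x y -> comm (wpown x m) y.
Proof. move=> H; elim: m => [|m IH]; first exact: comm_nil. exact: comm_cat. Qed.

Lemma comm_wpow x y k : comm x y -> comm (wpow x k) y.
Proof. case: k => m H /=; apply: comm_wpown => //; exact: comm_winv. Qed.

Lemma comm_cons l w y : comm [:: l] y -> comm w y -> comm (l :: w) y.
Proof. move=> H1 H2; rewrite -cat1s; exact: comm_cat. Qed.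

Lemma braid : [:: la; lb; la] =b [:: lb; la; lb].
Proof. apply: rule_beq; constructor. Qed.

Lemma braid_ctx u v : u ++ [:: la; lb; la] ++ v =b u ++ [:: lb; la; lb] ++ v.
Proof. by rewrite braid. Qed.

Lemma aD : wa ++ wDelta =b wDelta ++ wb.
Proof. rewrite /wa /wDelta /wb /=. have := braid_ctx [:: la] [::]; by rewrite cats0. Qed.

Lemma bD : wb ++ wDelta =b wDelta ++ wa.
Proof.
rewrite /wa /wDelta /wb /=. have := braid_ctx [::] [:: la]; by rewrite /= => ->.
Qed.

Lemma delta3 : wpown wdelta 3 =b wpown wDelta 2.
Proof.
rewrite /wdelta /wDelta /wa /wb !wpownS wpown0 /=.
have := braid_ctx [::] [:: la; lb; la]. by rewrite /= => <-.
Qed.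

Lemma D2a : comm wa (wpown wDelta 2).
Proof.
rewrite /comm !wpownS wpown0 cats0 (catA wa). setoid_rewrite aD. rewrite -catA. setoid_rewrite bD. by rewrite catA.
Qed.

Lemma D2b : comm wb (wpown wDelta 2).
Proof.
rewrite /comm !wpownS wpown0 cats0 (catA wb). setoid_rewrite bD. rewrite -catA. setoid_rewrite aD. by rewrite catA.
Qed.

Lemma D2_central z : comm z (wpown wDelta 2).
Proof.
elim: z => [|l z IH]; first exact: comm_nil.
apply: comm_cons => //.
case: l => [[] []].
- have -> : [:: (GA, true)] = winv wa by []. apply: comm_winv; exact: D2a.
- exact: D2a.
- have -> : [:: (GB, true)] = winv wb by []. apply: comm_winv; exact: D2b.
- exact: D2b.
Qed.

Definition Cq (q : int) := wpow wdelta (3%:Z * q).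

Lemma Cq_D q : Cq q =b wpow wDelta (2%:Z * q).
Proof. by rewrite /Cq !wpowM delta3. Qed.

Lemma Cq_central q z : comm (Cq q) z.
Proof. rewrite Cq_D wpowM. apply: comm_wpow. apply: comm_sym. exact: D2_central. Qed.

Lemma bconj_beq u v : u =b v -> bconj u v.
Proof. move=> H; exists [::]; by rewrite /= cats0. Qed.

Lemma bconj_refl u : bconj u u.
Proof. exact: bconj_beq. Qed.

Lemma bconj_trans u v w : bconj u v -> bconj v w -> bconj u w.
Proof.
move=> [z1 H1] [z2 H2]; exists (z2 ++ z1).
rewrite winv_cat -!catA. rewrite -H2 -H1. by rewrite !catA.
Qed.

Lemma bconj_sym u v : bconj u v -> bconj v u.
Proof.
move=> [z H]; exists (winv z); rewrite winvK -H.
rewrite !catA winvL /= -catA. exact: canR'.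
Qed.

#[export] Instance bconj_Proper : Proper (beq ==> beq ==> iff) bconj.
Proof.
move=> u u1 H v v1 H1; split.
- move=> C; apply: bconj_trans (bconj_beq (beq_sym H)) _.
  apply: bconj_trans C _; exact: bconj_beq.
- move=> C; apply: bconj_trans (bconj_beq H) _.
  apply: bconj_trans C _; exact: bconj_beq (beq_sym H1).
Qed.

Lemma bconj_rot x y : bconj (x ++ y) (y ++ x).
Proof. exists (winv x); rewrite winvK -catA. exact: canL'. Qed.

Lemma conj_inv x y D : x ++ D =b D ++ y -> winv D ++ x =b y ++ winv D.
Proof.
move=> H.
transitivity (winv D ++ x ++ D ++ winv D); first by rewrite canR.
rewrite (catA x) H -catA. exact: canL'.
Qed.

Lemma cancel_ctx u v l : u ++ [:: l; linv l] ++ v =b u ++ v.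
Proof. by rewrite cancel1. Qed.
Lemma cancel_ctx' u v l : u ++ [:: linv l; l] ++ v =b u ++ v.
Proof. by rewrite cancel2. Qed.

Lemma tau_eq c c' : (c %% 3 = c' %% 3)%N -> tau c = tau c'.
Proof. by rewrite /tau => ->. Qed.

Lemma tau_cases c : [\/ tau c = tau 0 /\ tau c.+1 = tau 1,
                       tau c = tau 1 /\ tau c.+1 = tau 2 |
                       tau c = tau 2 /\ tau c.+1 = tau 3].
Proof.
have : (c %% 3 < 3)%N by rewrite ltn_mod.
case E: (c %% 3)%N => [|[|[|i]]] // _.
- apply: Or31; split; apply: tau_eq; lia.
- apply: Or32; split; apply: tau_eq; lia.
- apply: Or33; split; apply: tau_eq; lia.
Qed.

Lemma tau_delta c : tau c ++ wdelta =b wdelta ++ tau c.+1.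
Proof.
case: (tau_cases c) => [][-> ->].
- rewrite /= /wx /wdelta /wa /wb /=.
  have := braid_ctx [:: linv la] [:: la]; rewrite /= => <-.
  have := cancel_ctx' [::] [:: lb; la; la] la; by rewrite /=.
- rewrite /= /wdelta /wa /wb /=. exact: braid.
- rewrite /= /wx /wdelta /wa /wb /=.
  have := cancel_ctx [:: lb] [:: lb; la] la; by rewrite /= => ->.
Qed.

Lemma tau_pair c : tau c.+1 ++ tau c =b wdelta.
Proof.
case: (tau_cases c) => [][-> ->].
- rewrite /= /wx /wdelta /wa /wb /=.
  have := cancel_ctx [::] [:: lb; la] la; by rewrite /=.
- by [].
- rewrite /= /wx /wdelta /wa /wb /=.
  have := braid_ctx [:: linv la] [::]; rewrite /= => <-.
  have := cancel_ctx' [::] [:: lb; la] la; by rewrite /=.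
Qed.

Lemma sigma_Delta j : sigma j ++ wDelta =b wDelta ++ sigma j.+1.
Proof. rewrite /sigma /=; case: (odd j) => /=; [exact: aD | exact: bD]. Qed.

Lemma winv_delta : winv wdelta =b wb ++ winv wDelta.
Proof.
have -> : winv wDelta = winv wdelta ++ winv wa by [].
have := conj_inv aD; rewrite -/(winv wDelta) => <-.
have -> : winv wDelta = winv wdelta ++ winv wa by [].
by rewrite -catA winvL cats0.
Qed.

Fixpoint gwf (f : nat -> word) (j : nat) (es : seq nat) : word :=
  if es is e :: es' then wpown (f j) e ++ gwf f j.+1 es' else [::].

Lemma prodpow_gwf_gen f j es :
  flatten [seq wpown (f (j + i).+1) (nth 0%N es i) | i <- iota 0 (size es)] = gwf f j.+1 es.
Proof.
elim: es j => [|e es IH] j //=.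
rewrite addn0; congr (_ ++ _).
rewrite -(IH j.+1) -(addn0 1%N) iotaDl -map_comp.
congr flatten; apply: eq_map => i /=.
by rewrite addnS addSn.
Qed.

Lemma prodpow_gwf f es : prodpow f es = gwf f 1 es.
Proof. by rewrite /prodpow -prodpow_gwf_gen. Qed.

Definition gw (bl : seq (nat * nat)) : word := flatten [seq wpown (tau p.1) p.2 | p <- bl].

Lemma gw_nil : gw [::] = [::]. Proof. by []. Qed.
Lemma gw_cons p bl : gw (p :: bl) = wpown (tau p.1) p.2 ++ gw bl. Proof. by []. Qed.
Lemma gw_cat b1 b2 : gw (b1 ++ b2) = gw b1 ++ gw b2.
Proof. by rewrite /gw map_cat flatten_cat. Qed.

Fixpoint xbl (j : nat) (us : seq nat) : seq (nat * nat) :=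
  if us is u :: us' then (j, u) :: xbl j.+1 us' else [::].

Lemma gw_xbl j us : gw (xbl j us) = gwf tau j us.
Proof. elim: us j => [|u us IH] j //=. by rewrite -IH. Qed.

Lemma taupow_delta c e : wpown (tau c) e ++ wdelta =b wdelta ++ wpown (tau c.+1) e.
Proof.
elim: e => [|e IH]; first by rewrite ?wpown0 /= ?cats0.
rewrite !wpownS -catA IH catA tau_delta -catA. by [].
Qed.

Lemma taupow_deltan c e (r : nat) :
  wpown (tau c) e ++ wpown wdelta r =b wpown wdelta r ++ wpown (tau (c + r)) e.
Proof.
elim: r c => [|r IH] c; first by rewrite addn0 ?wpown0 /= ?cats0.
rewrite wpownS catA taupow_delta -catA IH catA addnS -addSn. by [].
Qed.

Definition shiftb (bl : seq (nat * nat)) := [seq (p.1.+1, p.2) | p <- bl].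

Lemma gw_delta bl : gw bl ++ wdelta =b wdelta ++ gw (shiftb bl).
Proof.
elim: bl => [|p bl IH]; first by rewrite ?wpown0 /= ?cats0.
rewrite /= -catA IH catA taupow_delta -catA. by [].
Qed.

Lemma gwf_delta j us : gwf tau j us ++ wdelta =b wdelta ++ gwf tau j.+1 us.
Proof.
elim: us j => [|u us IH] j; first by rewrite ?wpown0 /= ?cats0.
rewrite /= -catA IH catA taupow_delta -catA. by [].
Qed.

Lemma ndecomp (n : int) : exists q (r : nat), n = 3%:Z * q + r%:Z /\ (r < 3)%N.
Proof.
exists (n %/ 3)%Z, `|(n %% 3)%Z|%N; split; lia.
Qed.

Lemma wpow_delta_decomp q (r : nat) : wpow wdelta (3%:Z * q + r%:Z) =b Cq q ++ wpown wdelta r.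
Proof. by rewrite wpowD. Qed.

Lemma taupow_wpow n q (r : nat) c e : n = 3%:Z * q + r%:Z ->
  wpown (tau c) e ++ wpow wdelta n =b wpow wdelta n ++ wpown (tau (c + r)) e.
Proof.
move=> ->; rewrite wpow_delta_decomp catA.
have := Cq_central q (wpown (tau c) e); rewrite /comm => <-.
by rewrite -catA taupow_deltan catA.
Qed.

Lemma bconj_shift P X Y : comm P wdelta -> X ++ wdelta =b wdelta ++ Y ->
  bconj (P ++ X) (P ++ Y).
Proof.
move=> HP H; exists (winv wdelta); rewrite winvK.
rewrite -(catA P) H (catA P) HP -catA.
exact: canL'.
Qed.

Lemma comm_delta_pow n : comm (wpow wdelta n) wdelta.
Proof. apply: comm_wpow. by rewrite /comm. Qed.

Lemma bconj_shiftj n j us :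
  bconj (wpow wdelta n ++ gwf tau j us) (wpow wdelta n ++ gwf tau j.+1 us).
Proof. apply: bconj_shift; [exact: comm_delta_pow | exact: gwf_delta]. Qed.

Lemma bconj_shiftb n bl :
  bconj (wpow wdelta n ++ gw bl) (wpow wdelta n ++ gw (shiftb bl)).
Proof. apply: bconj_shift; [exact: comm_delta_pow | exact: gw_delta]. Qed.

Lemma reduce n pre c1 e1 c2 e2 post : tau c1 = tau c2.+1 ->
  wpow wdelta n ++ gw (pre ++ (c1, e1.+1) :: (c2, e2.+1) :: post) =b
  wpow wdelta (n + 1) ++ gw (shiftb (pre ++ [:: (c1, e1)]) ++ (c2, e2) :: post).
Proof.
move=> Ht.
rewrite gw_cat !gw_cons /= wpownSr wpownS Ht.
transitivity (wpow wdelta n ++ (gw pre ++ wpown (tau c1) e1) ++ (tau c2.+1 ++ tau c2) ++ wpown (tau c2) e2 ++ gw post).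
  by rewrite -!catA -Ht.
rewrite tau_pair.
have -> : gw pre ++ wpown (tau c1) e1 = gw (pre ++ [:: (c1, e1)]) by rewrite gw_cat gw_cons gw_nil cats0.
rewrite (catA (gw _)) gw_delta wpowS gw_cat !gw_cons /=.
by rewrite -!catA.
Qed.

Lemma gwf_mod j j' us : (j %% 3 = j' %% 3)%N -> gwf tau j us = gwf tau j' us.
Proof.
elim: us j j' => [|u us IH] j j' H //=.
rewrite (tau_eq H) (IH j.+1 j'.+1) //. lia.
Qed.

Fixpoint chk (j : nat) (bl : seq (nat * nat)) : bool :=
  if bl is p :: bl' then (p.1 %% 3 == j %% 3)%N && chk j.+1 bl' else true.

Lemma chk_gw j bl : chk j bl -> gw bl = gwf tau j (map snd bl).
Proof.
elim: bl j => [|[c e] bl IH] j //= /andP[/eqP H1 H2].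
by rewrite gw_cons /= (tau_eq H1) (IH j.+1).
Qed.

Lemma nochk bl : forall j c e, (c %% 3 = j %% 3)%N -> ~~ chk j ((c, e) :: bl) ->
  exists pre c1 e1 c2 e2 post,
    (c, e) :: bl = pre ++ (c1, e1) :: (c2, e2) :: post /\ (c2 %% 3 != c1.+1 %% 3)%N.
Proof.
elim: bl => [|[c' e'] bl IH] j c e H.
- by rewrite /= H eqxx.
- rewrite /= H eqxx /= => Hn.
  case E: (c' %% 3 == j.+1 %% 3)%N.
  + have [pre [c1 [e1 [c2 [e2 [post [H1 H2]]]]]]] := IH j.+1 c' e' (eqP E) Hn.
    exists ((c, e) :: pre), c1, e1, c2, e2, post; split => //. by rewrite H1.
  + exists [::], c, e, c', e', bl; split => //.
    move/negbT: E; lia.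
Qed.

Definition meas (bl : seq (nat * nat)) := (sumn (map snd bl) + size bl)%N.

Definition posb (bl : seq (nat * nat)) := all (fun p => 0 < p.2)%N bl.

Lemma gw_filter bl : gw (filter (fun p => 0 < p.2)%N bl) = gw bl.
Proof.
elim: bl => [|[c e] bl IH] //=. case: e => [|e] /=. by rewrite IH. by rewrite gw_cons IH.
Qed.

Lemma meas_filter bl : (meas (filter (fun p => 0 < p.2)%N bl) <= meas bl)%N.
Proof.
rewrite /meas; elim: bl => [|[c e] bl IH] //=. case: e => [|e] /=; lia.
Qed.

Lemma posb_filter bl : posb (filter (fun p => 0 < p.2)%N bl).
Proof. by rewrite /posb all_filter; apply/allP => p _; apply/implyP. Qed.

Lemma meas_cat b1 b2 : meas (b1 ++ b2) = (meas b1 + meas b2)%N.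
Proof. rewrite /meas map_cat sumn_cat size_cat; lia. Qed.

Lemma meas_shiftb bl : meas (shiftb bl) = meas bl.
Proof. by rewrite /meas /shiftb -map_comp size_map. Qed.

Lemma bconj_shiftk n c k us :
  bconj (wpow wdelta n ++ gwf tau c us) (wpow wdelta n ++ gwf tau (c + k) us).
Proof.
elim: k => [|k IH]; first by rewrite addn0; exact: bconj_refl.
apply: bconj_trans IH _; rewrite addnS; exact: bconj_shiftj.
Qed.

Lemma norm N : forall bl n, (meas bl < N)%N ->
  exists n' us', pos_exps us' /\ n <= n' /\ bconj (wpow wdelta n ++ gw bl) (xu_word n' us').
Proof.
elim: N => [|N IHN] bl n // Hm.
rewrite -gw_filter.
have Hm' := meas_filter bl.
have Hp := posb_filter bl.
move: Hm' Hp; set bl' := filter _ bl => Hm' Hp.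
case E: bl' => [|[c e] r].
- exists n, [::]; split => //; split => //.
  rewrite /xu_word prodpow_gwf /=; exact: bconj_refl.
case C: (chk c ((c, e) :: r)).
- exists n, (map snd ((c, e) :: r)); split.
    by move: Hp; rewrite E /posb /pos_exps all_map.
  split => //.
  rewrite (chk_gw C) /xu_word prodpow_gwf.
  have [k Hk] : exists k, ((c + k) %% 3 = 1 %% 3)%N by exists (4 - c %% 3)%N; lia.
  rewrite -(gwf_mod _ Hk); exact: bconj_shiftk.
- have [pre [c1 [e1 [c2 [e2 [post [H1 H2]]]]]]] := nochk (erefl (c %% 3)%N) (negbT C).
  rewrite E H1 in Hm' Hp *.
  move: Hp; rewrite /posb all_cat /= => /andP[_ /and3P[He1 He2 _]].
  case: (eqVneq (c2 %% 3) (c1 %% 3))%N => Hc.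
  +
    have Ht : tau c2 = tau c1 by apply: tau_eq.
    have -> : gw (pre ++ (c1, e1) :: (c2, e2) :: post) = gw (pre ++ (c1, (e1 + e2)%N) :: post).
      by rewrite !gw_cat !gw_cons /= Ht wpownD !catA.
    apply: (IHN _ n).
    move: Hm Hm'; rewrite !meas_cat /meas /=; lia.
  +
    have Ht : tau c1 = tau c2.+1 by apply: tau_eq; lia.
    clear H1 C E H2 Hc.
    case: e1 He1 Hm' => [|e1] // _; case: e2 He2 => [|e2] // _ Hm'.
    have [n' [us' [P1 [P2 P3]]]] := IHN (shiftb (pre ++ [:: (c1, e1)]) ++ (c2, e2) :: post) (n + 1)
      ltac:(move: Hm Hm'; rewrite !meas_cat meas_shiftb !meas_cat /meas /=; lia).
    exists n', us'; split => //; split; first lia.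
    by rewrite (@reduce n pre c1 e1 c2 e2 post Ht).
Qed.

Definition Qw (us : seq nat) : word := flatten [seq wpown wa u ++ winv wdelta | u <- us].

Lemma gwf_delta_inv j us : gwf tau j.+1 us =b winv wdelta ++ gwf tau j us ++ wdelta.
Proof. by rewrite gwf_delta canL'. Qed.

Lemma gwf_Qw us : gwf tau 1 us =b Qw us ++ wpown wdelta (size us).
Proof.
elim: us => [|u us IH] /=; first by [].
rewrite gwf_delta_inv IH /Qw /= -!catA. by rewrite (wpownSr wdelta).
Qed.

Fixpoint Rw (j : nat) (us : seq nat) : word :=
  if us is u :: us' then wpown (sigma j) u ++ sigma j.+1 ++ Rw j.+1 us' else [::].

Lemma sigma_Dinv j : sigma j ++ winv wDelta =b winv wDelta ++ sigma j.+1.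
Proof.
have -> : sigma j = sigma j.+2 by rewrite /sigma /= negbK.
symmetry; apply: conj_inv. exact: sigma_Delta.
Qed.

Lemma sigpow_Dinv j u : wpown (sigma j) u ++ winv wDelta =b winv wDelta ++ wpown (sigma j.+1) u.
Proof.
elim: u => [|u IH]; first by rewrite ?wpown0 /= ?cats0.
by rewrite !wpownS -catA IH catA sigma_Dinv -catA.
Qed.

Lemma Rw_c j u us : Rw j (u :: us) = wpown (sigma j) u ++ sigma j.+1 ++ Rw j.+1 us.
Proof. by []. Qed.

Lemma Dinv_sigma j : winv wDelta ++ sigma j =b sigma j.+1 ++ winv wDelta.
Proof. apply: conj_inv. exact: sigma_Delta. Qed.

Lemma Dinv_sigpow j u : winv wDelta ++ wpown (sigma j) u =b wpown (sigma j.+1) u ++ winv wDelta.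
Proof.
elim: u => [|u IH]; first by rewrite ?wpown0 /= ?cats0.
by rewrite !wpownS catA Dinv_sigma -catA IH catA.
Qed.

Lemma Dinv_Rw j us : winv wDelta ++ Rw j us =b Rw j.+1 us ++ winv wDelta.
Proof.
elim: us j => [|u us IH] j; first by rewrite /= ?cats0.
rewrite !Rw_c catA Dinv_sigpow -catA (catA (winv wDelta)) Dinv_sigma -catA.
by rewrite IH -!catA.
Qed.

Lemma Qw_Rw us : Qw us =b Rw 1 us ++ wpown (winv wDelta) (size us).
Proof.
elim: us => [|u us IH] //=.
rewrite /Qw /= -/(Qw us) IH winv_delta.
have -> : wpown wa u = wpown (sigma 1) u by [].
have -> : wb = sigma 2 by [].
rewrite -!catA; apply: beq_catl; apply: beq_catl.
by rewrite catA Dinv_Rw -catA.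
Qed.

Lemma Rw_cons j u us : Rw j (u :: us) =
  wpown (sigma j) u ++ gwf sigma j.+1 (map S us) ++ sigma (j + size us).+1.
Proof.
elim: us j u => [|v us IH] j u /=; first by rewrite addn0 cats0.
have := IH j.+1 v; rewrite Rw_c => ->.
by rewrite wpownS -!catA addSnnS.
Qed.

Lemma sigma_wpowD j l : sigma j ++ wpow wDelta l =b wpow wDelta l ++ sigma (j + `|l|).
Proof.
case: l => m /=.
- elim: m j => [|m IH] j; first by rewrite addn0 ?wpown0 /= ?cats0.
  rewrite wpownS catA sigma_Delta -catA IH catA addnS -addSn. by [].
- have H : forall k j, sigma j ++ wpown (winv wDelta) k =b wpown (winv wDelta) k ++ sigma (j + k).
    elim=> [|k IH] j'; first by rewrite addn0 ?wpown0 /= ?cats0.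
    rewrite wpownS catA sigma_Dinv -catA IH catA addnS -addSn. by [].
  exact: H.
Qed.

Lemma odd_absz_eq (x : int) (t : nat) (y : int) : x + t%:Z = 2%:Z * y -> odd `|x|%N = odd t.
Proof.
move=> H.
have : (`|x| %% 2 = t %% 2)%N by lia.
rewrite !modn2; by case: (odd _); case: (odd t).
Qed.

Lemma xu_garside n u us q (r s : nat) :
  n = 3%:Z * q + r%:Z -> (r + (size us).+1 = 3 * s)%N ->
  bconj (xu_word n (u :: us))
        (garside_word (2%:Z * q + 2%:Z * s%:Z - (size us).+1%:Z) (map S (u :: us))).
Proof.
move=> Hn Hs.
set t := (size us).+1.
set l := 2%:Z * q + 2%:Z * s%:Z - t%:Z.
rewrite /xu_word prodpow_gwf gwf_Qw Qw_Rw.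
have -> : size (u :: us) = t by [].
apply: bconj_trans (bconj_rot _ _) _.
have -> : wpown wdelta t = wpow wdelta t%:Z by [].
rewrite -(catA _ (wpow wdelta t)) -wpowD.
have -> : t%:Z + n = 3%:Z * (q + s%:Z) by rewrite Hn; lia.
rewrite -/(Cq _) Cq_D.
have -> : wpown (winv wDelta) t = wpow wDelta (- t%:Z) by rewrite wpowNn.
rewrite -(catA (Rw 1 (u :: us))) -wpowD.
have -> : - t%:Z + 2%:Z * (q + s%:Z) = l by rewrite /l; lia.
apply: bconj_trans (bconj_rot _ _) _.
rewrite Rw_cons !catA.
apply: bconj_trans (bconj_rot _ _) _.
rewrite !catA sigma_wpowD.
have -> : sigma ((1 + size us).+1 + `|l|) = wa.
  have Hp : odd `|l|%N = odd t by apply: (@odd_absz_eq l t (q + s%:Z)); rewrite /l; lia.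
  rewrite /sigma add1n -/t oddD Hp /=. by case: (odd (size us)).
have -> : garside_word l (map S (u :: us)) = wpow wDelta l ++ (wpown wa u.+1 ++ gwf sigma 2 (map S us)).
  by rewrite /garside_word prodpow_gwf.
rewrite wpownS !catA; exact: bconj_refl.
Qed.

Lemma gwf_rcons f j s x : gwf f j (rcons s x) = gwf f j s ++ wpown (f (j + size s)%N) x.
Proof.
elim: s j => [|y s IH] j /=; first by rewrite addn0 cats0.
by rewrite IH addSnnS catA.
Qed.

Lemma xu_le_absurd n us n' us' : xu_le n us n' us' -> (n < n' \/ (n = n' /\ (size us' < size us)%N)) -> False.
Proof.
rewrite /xu_le => H [H1|[H2 H3]].
- case: H => [H|[H4 _]]; lia.
- case: H => [H|[_ [H|[H _]]]]; lia.
Qed.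

Lemma div3 n us q (r : nat) : xu_normal n us -> (2 <= size us)%N ->
  n = 3%:Z * q + r%:Z -> ((r + size us) %% 3 = 0)%N.
Proof.
move=> [Hp Hmin] Ht Hn.
case: us Hp Hmin Ht => [|u1 rest] // Hp Hmin Ht.
case: (lastP rest) Hp Hmin Ht => [|mid ut] // Hp Hmin _.
have [Hu1 Hut] : (0 < u1)%N /\ (0 < ut)%N.
  by move: Hp; rewrite /pos_exps /= all_rcons => /and3P[-> -> _].
have tE : size (u1 :: rcons mid ut) = (size mid).+2 by rewrite /= size_rcons.
rewrite tE.
have Hrot : bconj (xu_word n (u1 :: rcons mid ut))
   (wpow wdelta n ++ wpown (tau ((size mid).+2 + r)) ut ++ wpown (tau 1) u1 ++ gwf tau 2 mid).
  rewrite /xu_word prodpow_gwf -rcons_cons gwf_rcons.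
  rewrite (catA (wpow wdelta n)).
  apply: bconj_trans (bconj_rot _ _) _.
  rewrite catA (taupow_wpow _ _ Hn) -catA /=.
  have -> : (1 + (size mid).+1)%N = (size mid).+2 by lia.
  exact: bconj_refl.
have : ((r + (size mid).+2) %% 3 < 3)%N by rewrite ltn_mod.
case E: ((r + (size mid).+2) %% 3)%N => [|[|[|]]] // _; exfalso.
-
  have Ht1 : tau ((size mid).+2 + r) = tau 1 by apply: tau_eq; lia.
  have H := Hmin n ((ut + u1)%N :: mid) ltac:(move: Hp; rewrite /pos_exps /= all_rcons => /and3P[_ _ ->]; rewrite andbT; lia).
  apply: xu_le_absurd (H _) _.
    apply: bconj_trans Hrot _. rewrite Ht1 /xu_word prodpow_gwf /= wpownD -catA. exact: bconj_refl.
  right; split => //; rewrite /= size_rcons; lia.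
-
  have Ht2 : tau ((size mid).+2 + r) = tau 1.+1 by apply: tau_eq; lia.
  case: ut Hut Hrot Hp Hmin {E tE} => [|ut] // _ Hrot Hp Hmin.
  case: u1 Hu1 Hrot Hp Hmin => [|u1] // _ Hrot Hp Hmin.
  have B : wpow wdelta n ++ wpown (tau ((size mid).+2 + r)) ut.+1 ++
           wpown (tau 1) u1.+1 ++ gwf tau 2 mid =b
           wpow wdelta (n + 1) ++ gw (shiftb [:: ((size mid).+2 + r, ut)%N] ++ (1%N, u1) :: xbl 2 mid).
    rewrite -(@reduce n [::] _ ut 1%N u1 (xbl 2 mid) Ht2).
    by rewrite cat0s !gw_cons gw_xbl /=.
  set bl0 := shiftb _ ++ _ in B.
  have [n' [us' [P1 [P2 P3]]]] := @norm (meas bl0).+1 bl0 (n + 1) (ltnSn _).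
  apply: xu_le_absurd (Hmin n' us' P1 _) _.
    apply: bconj_trans Hrot _. rewrite B. exact: P3.
  left; lia.
Qed.

Lemma rot1_conj n q (r : nat) x s : n = 3%:Z * q + r%:Z ->
  ((r + (size s).+1) %% 3 = 0)%N ->
  bconj (xu_word n (x :: s)) (xu_word n (rcons s x)).
Proof.
move=> Hn H3.
apply: bconj_sym.
rewrite /xu_word !prodpow_gwf gwf_rcons.
rewrite (catA (wpow wdelta n)).
apply: bconj_trans (bconj_rot _ _) _.
rewrite catA (taupow_wpow _ _ Hn) -catA.
have -> : tau (1 + size s + r) = tau 0 by apply: tau_eq; lia.
have -> : wpown (tau 0) x ++ gwf tau 1 s = gwf tau 0 (x :: s) by [].
exact: bconj_shiftj.
Qed.

Lemma roti_conj n q (r : nat) us : n = 3%:Z * q + r%:Z ->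
  ((r + size us) %% 3 = 0)%N ->
  forall i, (i <= size us)%N -> bconj (xu_word n us) (xu_word n (rot i us)).
Proof.
move=> Hn H3; elim=> [|i IH] Hi; first by rewrite rot0; exact: bconj_refl.
apply: bconj_trans (IH (ltnW Hi)) _.
rewrite rotS //.
case E: (rot i us) => [|x s].
  by rewrite /=; exact: bconj_refl.
rewrite rot1_cons. apply: rot1_conj Hn _.
have Hsz : (size s).+1 = size us by rewrite -(size_rot i us) E.
by rewrite Hsz.
Qed.

Lemma lexle_refl s : lexle s s.
Proof. by elim: s => //= x s ->; rewrite eqxx ltnn. Qed.

Lemma lexle_mapS s s' : lexle (map S s) (map S s') = lexle s s'.
Proof. by elim: s s' => [|x s IH] [|y s'] //=; rewrite ltnS eqSS IH. Qed.

Lemma all_rot (p : pred nat) i s : all p (rot i s) = all p s.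
Proof. by rewrite /rot all_cat andbC -all_cat cat_take_drop. Qed.

Lemma lex_rot n us q (r : nat) : xu_normal n us -> n = 3%:Z * q + r%:Z ->
  ((r + size us) %% 3 = 0)%N -> forall i, (i < size us)%N -> lexle us (rot i us).
Proof.
move=> [Hp Hmin] Hn H3 i Hi.
have := Hmin n (rot i us) ltac:(by rewrite /pos_exps all_rot) (roti_conj Hn H3 (ltnW Hi)).
rewrite /xu_le size_rot => [[H|[_ [H|[_ H]]]]] //; lia.
Qed.

Lemma int_odd_even k : ~~ int_odd (2%:Z * k).
Proof. rewrite /int_odd (@odd_absz_eq _ 0 k) //; lia. Qed.

Lemma int_odd_odd k : int_odd (2%:Z * k + 1).
Proof. rewrite /int_odd (@odd_absz_eq _ 1 (k + 1)) //; lia. Qed.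

Lemma main_big n us : xu_normal n us -> (2 <= size us)%N ->
  exists l : int, 2%:Z * n - (size us)%:Z = 3%:Z * l /\
    garside_normal l [seq u.+1 | u <- us] /\
    bconj (xu_word n us) (garside_word l [seq u.+1 | u <- us]).
Proof.
move=> Hx Ht.
have [q [r [Hn Hr]]] := ndecomp n.
have H3 := div3 Hx Ht Hn.
have [s Hs] : exists s, (r + size us = 3 * s)%N by exists ((r + size us) %/ 3)%N; lia.
case: us Hx Ht H3 Hs => [|u us] // Hx Ht H3 Hs.
have Hs' : (r + (size us).+1 = 3 * s)%N by [].
exists (2%:Z * q + 2%:Z * s%:Z - (size us).+1%:Z); split; first by rewrite /=; move: Hs'; lia.
split; last exact: xu_garside Hn Hs.
split; first by rewrite /pos_exps all_map; apply/allP.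
apply: Or33; split.
- by [].
- have := Hx.1; rewrite /pos_exps all_map => /allP Hp; apply/allP => x /Hp /=; lia.
- rewrite size_map /int_odd.
  apply: (@odd_absz_eq _ _ (q + s%:Z)); lia.
- move=> i; rewrite size_map => Hi.
  rewrite -map_rot lexle_mapS. exact: lex_rot Hx Hn H3 i Hi.
Qed.

Lemma Dk_central k z : comm (wpow wDelta (2%:Z * k)) z.
Proof. rewrite wpowM; apply: comm_wpow; apply: comm_sym; exact: D2_central. Qed.

Lemma bconj_central D x y : (forall z, comm D z) -> bconj (D ++ x ++ y) (D ++ y ++ x).
Proof.
move=> HD. rewrite catA (HD x) -catA.
apply: bconj_trans (bconj_rot _ _) _; rewrite -catA; exact: bconj_refl.
Qed.

Lemma xu_dec k (r : nat) us : bconj (xu_word (3%:Z * k + r%:Z) us)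
   (wpow wDelta (2%:Z * k) ++ wpown wdelta r ++ prodpow tau us) <->
   bconj (xu_word (3%:Z * k + r%:Z) us) (xu_word (3%:Z * k + r%:Z) us).
Proof.
rewrite /xu_word wpow_delta_decomp Cq_D -catA. split => _; exact: bconj_refl.
Qed.

Lemma xu_eq k (r : nat) us : xu_word (3%:Z * k + r%:Z) us =b
   wpow wDelta (2%:Z * k) ++ wpown wdelta r ++ prodpow tau us.
Proof. by rewrite /xu_word wpow_delta_decomp Cq_D -catA. Qed.

Lemma gnorm_even0 k : garside_normal (2 * k) [::].
Proof. split => //; apply: Or31; split => //; rewrite /int_odd (@odd_absz_eq _ 0 k) //; lia. Qed.

Lemma even2k k : ~~ int_odd (2 * k).
Proof. rewrite /int_odd (@odd_absz_eq _ 0 k) //; lia. Qed.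

Lemma case1 n k : n = 3 * k -> bconj (xu_word n [::]) (garside_word (2 * k) [::]).
Proof.
move=> Hn. have -> : n = 3%:Z * k + (0%N)%:Z by lia.
rewrite xu_eq /garside_word !prodpow_gwf /= ?cats0.
exact: bconj_refl.
Qed.

Lemma case2 n k : n = 3 * k + 1 -> bconj (xu_word n [::]) (garside_word (2 * k) [:: 1; 1]%N).
Proof.
move=> Hn. have -> : n = 3%:Z * k + (1%N)%:Z by lia.
rewrite xu_eq /garside_word !prodpow_gwf /= ?cats0 ?wpown1.
have := @bconj_central (wpow wDelta (2%:Z * k)) [:: lb] [:: la] (Dk_central k).
by [].
Qed.

Lemma case3 n k : n = 3 * k + 2 -> bconj (xu_word n [::]) (garside_word (2 * k) [:: 3; 1]%N).
Proof.
move=> Hn. have -> : n = 3%:Z * k + (2%N)%:Z by lia.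
rewrite xu_eq /garside_word !prodpow_gwf /= ?cats0.
set D := wpow wDelta _.
apply: bconj_trans (@bconj_central D [:: lb] [:: la; lb; la] (Dk_central k)) _.
have -> : [:: la; lb; la] ++ [:: lb] = [:: la] ++ [:: lb; la; lb] ++ [::] by [].
rewrite -braid_ctx /=.
have := @bconj_central D [:: la; la; lb] [:: la] (Dk_central k).
by [].
Qed.

Lemma case4 n k u : n = 3 * k -> bconj (xu_word n [:: u]) (garside_word (2 * k) [:: u]).
Proof.
move=> Hn. have -> : n = 3%:Z * k + (0%N)%:Z by lia.
rewrite xu_eq /garside_word !prodpow_gwf /= ?cats0.
exact: bconj_refl.
Qed.

Lemma case5 n k : n = 3 * k + 1 -> bconj (xu_word n [:: 1%N]) (garside_word (2 * k) [:: 2; 1]%N).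
Proof.
move=> Hn. have -> : n = 3%:Z * k + (1%N)%:Z by lia.
rewrite xu_eq /garside_word !prodpow_gwf /= ?cats0.
have := @bconj_central (wpow wDelta (2%:Z * k)) [:: lb] [:: la; la] (Dk_central k).
by [].
Qed.

Lemma case6 n k u : n = 3 * k + 2 -> bconj (xu_word n [:: u]) (garside_word (2 * k + 1) [:: u.+1]).
Proof.
move=> Hn. have -> : n = 3%:Z * k + (2%N)%:Z by lia.
rewrite xu_eq /garside_word !prodpow_gwf /= ?cats0.
have E : 2 * k + 1 = 2%:Z * k + (1%N)%:Z by lia.
rewrite ?E.
apply: bconj_beq.
rewrite wpowD -catA; apply: beq_catl.
rewrite wpow_nat wpown1.
have -> : [:: lb, la, lb, la & wpown (tau 1) u] = [::] ++ [:: lb; la; lb] ++ (la :: wpown (tau 1) u) by [].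
by rewrite -braid_ctx.
Qed.

Unset Implicit Arguments.

Theorem lemma2p7 (n : int) (us : seq nat) :
  xu_normal n us ->
  let t := size us in
  let u1 := nth 0%N us 0 in
  (* w = delta^(3k) *)
  (forall k : int, t = 0%N -> n = 3 * k ->
     garside_normal (2 * k) [::] /\ bconj (xu_word n us) (garside_word (2 * k) [::])) /\
  (* w = delta^(3k+1) *)
  (forall k : int, t = 0%N -> n = 3 * k + 1 ->
     garside_normal (2 * k) [:: 1; 1]%N /\
     bconj (xu_word n us) (garside_word (2 * k) [:: 1; 1]%N)) /\
  (* w = delta^(3k+2) *)
  (forall k : int, t = 0%N -> n = 3 * k + 2 ->
     garside_normal (2 * k) [:: 3; 1]%N /\
     bconj (xu_word n us) (garside_word (2 * k) [:: 3; 1]%N)) /\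
  (* w = delta^(3k) a^u1 *)
  (forall k : int, t = 1%N -> n = 3 * k ->
     garside_normal (2 * k) [:: u1] /\ bconj (xu_word n us) (garside_word (2 * k) [:: u1])) /\
  (* w = delta^(3k+1) a *)
  (forall k : int, t = 1%N -> u1 = 1%N -> n = 3 * k + 1 ->
     garside_normal (2 * k) [:: 2; 1]%N /\
     bconj (xu_word n us) (garside_word (2 * k) [:: 2; 1]%N)) /\
  (* w = delta^(3k+2) a^u1 *)
  (forall k : int, t = 1%N -> n = 3 * k + 2 ->
     garside_normal (2 * k + 1) [:: u1.+1] /\
     bconj (xu_word n us) (garside_word (2 * k + 1) [:: u1.+1])) /\
  (* t >= 2 *)
  ((2 <= t)%N ->
     exists l : int, 2 * n - t%:Z = 3 * l /\
       garside_normal l [seq u.+1 | u <- us] /\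
       bconj (xu_word n us) (garside_word l [seq u.+1 | u <- us])).
Proof.
move=> Hx t u1.
have Hp := Hx.1.
split; [|split; [|split; [|split; [|split; [|split]]]]].
- move=> k /size0nil -> Hn; split; [exact: gnorm_even0 | exact: case1].
- move=> k /size0nil -> Hn; split; last exact: case2.
  split => //; apply: Or32; split; [exact: even2k | by exists 1%N].
- move=> k /size0nil -> Hn; split; last exact: case3.
  split => //; apply: Or32; split; [exact: even2k | by exists 3%N].
- move=> k Ht Hn; case: us Hx Hp @t @u1 Ht => [|u [|v us]] // Hx Hp t u1 _.
  split; last exact: case4.
  split => //; apply: Or31; split => //; exact: even2k.
- move=> k Ht Hu Hn; case: us Hx Hp @t @u1 Ht Hu => [|u [|v us]] // Hx Hp t u1 _ Hu.
  rewrite /u1 /= in Hu; subst u.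
  split; last exact: case5.
  split => //; apply: Or32; split; [exact: even2k | by exists 2%N].
- move=> k Ht Hn; case: us Hx Hp @t @u1 Ht => [|u [|v us]] // Hx Hp t u1 _.
  split; last exact: case6.
  have Hu : (0 < u)%N by move: Hp; rewrite /pos_exps /= andbT.
  split => //; apply: Or33; split => //.
  + rewrite /int_odd (@odd_absz_eq _ 1 (k + 1)) //; lia.
  + by move=> [|i] //= _; rewrite eqxx orbT.
- move=> Ht. have [l [H1 H2]] := main_big Hx Ht. exists l; split => //; lia.
Qed.
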